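(* The coupled relation $(\mathrm{Id},\approx^n_A)$ is a call-by-name coupled logical bisimulation, where $\mathrm{Id}$ is the identity relation on $\Lambda^\bullet$. Conversely, if $(\mathcal{R}',\mathcal{R})$ is a call-by-name coupled logical bisimulation with $\mathcal{R}'\subseteq\mathcal{R}\cap\mathrm{Id}$, then $\mathcal{R}$ is an applicative bisimulation; in particular $\approx^n_2$ is an applicative bisimulation.
   Context: $\Lambda^\bullet$ is the set of closed $\lambda$-terms. Contexts are generated by $C::=x\mid[\cdot]\mid C\,C\mid\lambda x.C$, possibly with several holes numbered left to right; $C[\widetilde M]$ fills the $i$-th hole with $M_i$. For $\mathcal{R}\subseteq\Lambda^\bullet\times\Lambda^\bullet$, $\mathcal{R}^\star=\{(C[\widetilde M],C[\widetilde N]) : C\text{ a context},\ M_i\,\mathcal{R}\,N_i\ \forall i,\ C[\widetilde M],C[\widetilde N]\in\Lambda^\bullet\}$. Call-by-name reduction on closed terms: $MN\longrightarrow M'N$ if $M\longrightarrow M'$, and $(\lambda x.P)N\longrightarrow P[N/x]$; $\Longrightarrow$ is its reflexive transitive closure. A relation $\mathcal{R}\subseteq\Lambda^\bullet\times\Lambda^\bullet$ is an applicative bisimulation if $M\,\mathcal{R}\,N$ implies: whenever $M\Longrightarrow\lambda x.P$, then $N\Longrightarrow\lambda x.Q$ for some $Q$ with $P[W/x]\,\mathcal{R}\,Q[W/x]$ for all $W\in\Lambda^\bullet$, and conversely with $M,N$ exchanged; $\approx^n_A$ is the union of all applicative bisimulations. A coupled relation is a pair $(\mathcal{R}_1,\mathcal{R}_2)$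 of relations on $\Lambda^\bullet$ with $\mathcal{R}_1\subseteq\mathcal{R}_2$. It is a (call-by-name) coupled logical bisimulation if whenever $M\,\mathcal{R}_2\,N$: (1) if $M\longrightarrow M'$ then there is $N'$ with $N\Longrightarrow N'$ and $M'\,\mathcal{R}_2\,N'$; (2) if $M=\lambda x.M'$ then $N\Longrightarrow\lambda x.N'$ for some $N'$ and for all $P,Q\in\Lambda^\bullet$ with $P\,\mathcal{R}_1^\star\,Q$, $M'[P/x]\,\mathcal{R}_2\,N'[Q/x]$; (3) the converses of (1),(2) with $M$ and $N$ exchanged. $(\approx^n_1,\approx^n_2)$ is the componentwise union of all such bisimulations. *)

(* Defs.v *)
From Stdlib Require Import Arith Relations.

Inductive term : Type :=
| Var : nat -> term
| App : term -> term -> term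
| Lam : term -> term.

Fixpoint closed_at (k : nat) (M : term) : Prop :=
  match M with
  | Var n => n < k
  | App M1 M2 => closed_at k M1 /\ closed_at k M2
  | Lam M1 => closed_at (S k) M1
  end.

Definition closed (M : term) : Prop := closed_at 0 M.

(* subst k W M = M[W/k]; meant for closed W (no lifting needed),
   free indices above k are decremented (the binder is removed). *)
Fixpoint subst (k : nat) (W : term) (M : term) : term :=
  match M with
  | Var n => if Nat.eqb n k then W else if Nat.ltb k n then Var (n - 1) else Var n
  | App M1 M2 => App (subst k W M1) (subst k W M2)
  | Lam M1 => Lam (subst (S k) W M1)
  end.

(* P[W/x] where lambda x. P is the body P with bound index 0 *)
Definition subst0 (P W : term) : term := subst 0 W P.

Inductive step : term -> term -> Prop :=
| step_app : forall M M' N, step M M' -> step (App M N) (App M' N)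
| step_beta : forall P N, step (App (Lam P) N) (subst0 P N).

Definition steps : term -> term -> Prop := clos_refl_trans term step.

Definition rel := term -> term -> Prop.

Definition rel_on_closed (R : rel) : Prop :=
  forall M N, R M N -> closed M /\ closed N.

Definition Id : rel := fun M N => closed M /\ M = N.

(* multi-hole contexts, holes numbered left to right *)
Inductive ctx : Type :=
| CVar : nat -> ctx
| CHole : ctx
| CApp : ctx -> ctx -> ctx
| CLam : ctx -> ctx.

Fixpoint holes (C : ctx) : nat :=
  match C with
  | CVar _ => 0
  | CHole => 1
  | CApp C1 C2 => holes C1 + holes C2
  | CLam C1 => holes C1
  end.

(* fill C s: the i-th hole (from the left, starting at 0) receives s i *)
Fixpoint fill (C : ctx) (s : nat -> term) : term :=
  match C with
  | CVar n => Var n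
  | CHole => s 0
  | CApp C1 C2 => App (fill C1 s) (fill C2 (fun i => s (holes C1 + i)))
  | CLam C1 => Lam (fill C1 s)
  end.

Definition star (R : rel) : rel :=
  fun M N => exists (C : ctx) (Ms Ns : nat -> term),
    (forall i, i < holes C -> R (Ms i) (Ns i)) /\
    M = fill C Ms /\ N = fill C Ns /\ closed M /\ closed N.

Definition app_bisim (R : rel) : Prop :=
  rel_on_closed R /\
  forall M N, R M N ->
    (forall P, steps M (Lam P) ->
       exists Q, steps N (Lam Q) /\
         forall W, closed W -> R (subst0 P W) (subst0 Q W)) /\
    (forall Q, steps N (Lam Q) ->
       exists P, steps M (Lam P) /\
         forall W, closed W -> R (subst0 P W) (subst0 Q W)).

Definition app_bisimilar : rel := fun M N => exists R, app_bisim R /\ R M N.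

Definition coupled_logical_bisim (R1 R2 : rel) : Prop :=
  rel_on_closed R1 /\ rel_on_closed R2 /\
  (forall M N, R1 M N -> R2 M N) /\
  forall M N, R2 M N ->
    (forall M', step M M' -> exists N', steps N N' /\ R2 M' N') /\
    (forall M', M = Lam M' -> exists N', steps N (Lam N') /\
       forall P Q, star R1 P Q -> R2 (subst0 M' P) (subst0 N' Q)) /\
    (forall N', step N N' -> exists M', steps M M' /\ R2 M' N') /\
    (forall N', N = Lam N' -> exists M', steps M (Lam M') /\
       forall P Q, star R1 P Q -> R2 (subst0 M' P) (subst0 N' Q)).

Definition clb_approx1 : rel :=
  fun M N => exists R1 R2, coupled_logical_bisim R1 R2 /\ R1 M N.
Definition clb_approx2 : rel :=
  fun M N => exists R1 R2, coupled_logical_bisim R1 R2 /\ R2 M N.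

(* Main.v *)
Require Import Defs.
From Stdlib Require Import Arith Relations Lia.

Lemma closed_mono : forall M k k', closed_at k M -> k <= k' -> closed_at k' M.
Proof.
  induction M; simpl; intros k k' H Hle.
  - lia.
  - destruct H; split; eauto.
  - apply (IHM (S k)); auto; lia.
Qed.

Lemma subst_closed : forall M k W, closed_at (S k) M -> closed W -> closed_at k (subst k W M).
Proof.
  induction M; simpl; intros k W H HW.
  - destruct (Nat.eqb n k) eqn:E.
    + apply (closed_mono W 0); auto; lia.
    + apply Nat.eqb_neq in E. destruct (Nat.ltb k n) eqn:E2.
      * apply Nat.ltb_lt in E2. lia.
      * simpl. lia.
  - destruct H; split; auto.
  - apply IHM; auto.
Qed.

Lemma step_closed : forall M M', step M M' -> closed M -> closed M'.
Proof.
  induction 1; unfold closed in *; simpl; intros Hc.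
  - destruct Hc; split; auto.
  - destruct Hc. apply subst_closed; auto.
Qed.

Lemma steps_closed : forall M M', steps M M' -> closed M -> closed M'.
Proof.
  induction 1; eauto using step_closed.
Qed.

Lemma step_det : forall M M1, step M M1 -> forall M2, step M M2 -> M1 = M2.
Proof.
  induction 1; intros M2 H2; inversion H2; subst; auto.
  - f_equal; auto.
  - inversion H.
  - match goal with H : step (Lam _) _ |- _ => inversion H end.
Qed.

Lemma steps_val : forall A B, steps A B -> forall V, steps A (Lam V) -> steps B (Lam V).
Proof.
  intros A B H. apply clos_rt_rt1n in H. induction H; intros V H2; auto.
  apply clos_rt_rt1n in H2. inversion H2; subst.
  - inversion H.
  - apply IHclos_refl_trans_1n. rewrite (step_det _ _ H _ H1). apply clos_rt1n_rt; auto.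
Qed.

Lemma fill_ext : forall C s t, (forall i, i < holes C -> s i = t i) -> fill C s = fill C t.
Proof.
  induction C; simpl; intros s t H; try (apply H; lia).
  - reflexivity.
  - f_equal.
    + apply IHC1; intros; apply H; lia.
    + apply IHC2; intros; apply H; lia.
  - f_equal; auto.
Qed.

Fixpoint ctx_of (M : term) : ctx :=
  match M with
  | Var n => CVar n
  | App A B => CApp (ctx_of A) (ctx_of B)
  | Lam A => CLam (ctx_of A)
  end.

Lemma holes_ctx_of : forall M, holes (ctx_of M) = 0.
Proof. induction M; simpl; auto. rewrite IHM1, IHM2; auto. Qed.

Lemma fill_ctx_of : forall M s, fill (ctx_of M) s = M.
Proof. induction M; simpl; intros; auto. rewrite IHM1, IHM2; auto. rewrite IHM; auto. Qed.

Lemma star_refl : forall R W, closed W -> star R W W.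
Proof.
  intros R W HW. exists (ctx_of W), (fun _ => W), (fun _ => W).
  rewrite holes_ctx_of, fill_ctx_of. repeat split; auto. intros; lia.
Qed.

Definition RC (R : rel) : rel := fun A B => exists A0 B0, R A0 B0 /\ steps A0 A /\ steps B0 B.

Lemma RC_bisim : forall R, app_bisim R -> app_bisim (RC R).
Proof.
  intros R [Hc H]. split.
  - intros A B (A0 & B0 & HR & HA & HB). destruct (Hc _ _ HR).
    split; eapply steps_closed; eauto.
  - intros A B (A0 & B0 & HR & HA & HB). destruct (H _ _ HR) as [H1 H2]. split.
    + intros P HP. destruct (H1 P) as (Q & HQ & HW).
      * eapply rt_trans; eauto.
      * exists Q. split. eapply steps_val; eauto.
        intros W HW'. exists (subst0 P W), (subst0 Q W). repeat split; auto; apply rt_refl.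
    + intros Q HQ. destruct (H2 Q) as (P & HP & HW).
      * eapply rt_trans; eauto.
      * exists P. split. eapply steps_val; eauto.
        intros W HW'. exists (subst0 P W), (subst0 Q W). repeat split; auto; apply rt_refl.
Qed.

Lemma RC_incl : forall R M N, R M N -> RC R M N.
Proof. intros. exists M, N. repeat split; auto; apply rt_refl. Qed.

Lemma clb_left : forall R1 R2, coupled_logical_bisim R1 R2 ->
  forall M P, steps M (Lam P) -> forall N, R2 M N ->
  exists Q, steps N (Lam Q) /\ forall W, closed W -> R2 (subst0 P W) (subst0 Q W).
Proof.
  intros R1 R2 (Hc1 & Hc2 & Hi & H) M P Hs. apply clos_rt_rt1n in Hs.
  remember (Lam P) as L. induction Hs; intros N HR; subst.
  - destruct (H _ _ HR) as (_ & H2 & _). destruct (H2 P eq_refl) as (N' & HN & HW).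
    exists N'. split; auto. intros W HW'. apply HW. apply star_refl; auto.
  - destruct (H _ _ HR) as (H1 & _). destruct (H1 _ H0) as (N1 & HN1 & HR1).
    destruct (IHHs eq_refl N1 HR1) as (Q & HQ & HW). exists Q. split; auto.
    eapply rt_trans; eauto.
Qed.

Lemma clb_right : forall R1 R2, coupled_logical_bisim R1 R2 ->
  forall N Q, steps N (Lam Q) -> forall M, R2 M N ->
  exists P, steps M (Lam P) /\ forall W, closed W -> R2 (subst0 P W) (subst0 Q W).
Proof.
  intros R1 R2 (Hc1 & Hc2 & Hi & H) N Q Hs. apply clos_rt_rt1n in Hs.
  remember (Lam Q) as L. induction Hs; intros M HR; subst.
  - destruct (H _ _ HR) as (_ & _ & _ & H2). destruct (H2 Q eq_refl) as (M' & HM & HW).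
    exists M'. split; auto. intros W HW'. apply HW. apply star_refl; auto.
  - destruct (H _ _ HR) as (_ & _ & H1 & _). destruct (H1 _ H0) as (M1 & HM1 & HR1).
    destruct (IHHs eq_refl M1 HR1) as (P & HP & HW). exists P. split; auto.
    eapply rt_trans; eauto.
Qed.

Lemma clb_app_bisim : forall R1 R2, coupled_logical_bisim R1 R2 -> app_bisim R2.
Proof.
  intros R1 R2 Hb. pose proof Hb as (Hc1 & Hc2 & _). split; auto.
  intros M N HR. split.
  - intros P HP. eapply clb_left; eauto.
  - intros Q HQ. eapply clb_right; eauto.
Qed.

Theorem mainTheorem9 :
  coupled_logical_bisim Id app_bisimilar /\
  (forall R' R : rel, coupled_logical_bisim R' R ->
     (forall M N, R' M N -> R M N /\ Id M N) -> app_bisim R) /\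
  app_bisim clb_approx2.
Proof.
  split; [|split].
  - assert (HId : app_bisim Id).
    { split.
      - intros M N [HM E]; subst; auto.
      - intros M N [HM E]; subst. split.
        + intros P HP. exists P. split; auto. intros W HW.
          assert (closed (Lam P)) by (eapply steps_closed; eauto).
          split; auto. apply subst_closed; auto.
        + intros P HP. exists P. split; auto. intros W HW.
          assert (closed (Lam P)) by (eapply steps_closed; eauto).
          split; auto. apply subst_closed; auto. }
    split; [|split; [|split]].
    + intros M N [HM E]; subst; auto.
    + intros M N (R & [Hc _] & HR). auto.
    + intros M N HI. exists Id; auto.
    + intros M N (R & HRb & HR). pose proof HRb as [Hc H].
      destruct (H _ _ HR) as [H1 H2]. split; [|split; [|split]].
      * intros M' HM'. exists N. split; [apply rt_refl|].
        exists (RC R). split; [apply RC_bisim; auto|].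
        exists M, N. split; [auto|split; [apply rt_step; auto | apply rt_refl]].
      * intros M' E. subst. destruct (H1 M' (rt_refl _ _ _)) as (Q & HQ & HW).
        exists Q. split; auto. intros P0 Q0 (C & Ms & Ns & Hh & E1 & E2 & HP & HQ0).
        assert (EQ : P0 = Q0) by (subst; apply fill_ext; intros i Hi; destruct (Hh i Hi); auto).
        rewrite <- EQ. exists R; split; auto.
      * intros N' HN'. exists M. split; [apply rt_refl|].
        exists (RC R). split; [apply RC_bisim; auto|].
        exists M, N. split; [auto|split; [apply rt_refl | apply rt_step; auto]].
      * intros N' E. subst. destruct (H2 N' (rt_refl _ _ _)) as (P & HP & HW).
        exists P. split; auto. intros P0 Q0 (C & Ms & Ns & Hh & E1 & E2 & HP0 & HQ0).
        assert (EQ : P0 = Q0) by (subst; apply fill_ext; intros i Hi; destruct (Hh i Hi); auto).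
        rewrite <- EQ. exists R; split; auto.
  - intros R' R Hb _. eapply clb_app_bisim; eauto.
  - split.
    + intros M N (R1 & R2 & (Hc1 & Hc2 & _) & HR). auto.
    + intros M N (R1 & R2 & Hb & HR). split.
      * intros P HP. destruct (clb_left _ _ Hb _ _ HP _ HR) as (Q & HQ & HW).
        exists Q. split; auto. intros W HW'. exists R1, R2. auto.
      * intros Q HQ. destruct (clb_right _ _ Hb _ _ HQ _ HR) as (P & HP & HW).
        exists P. split; auto. intros W HW'. exists R1, R2. auto.
Qed.
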